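(* Let $G$ be a $k$-degenerate graph with maximum degree $\Delta(G)$ and let $H$ be an $l$-degenerate graph. Then $G+_T H$ is $\max\{2\Delta(G),\,k+l\}$-degenerate.
   Context: A graph is $k$-degenerate if its vertices can be successively deleted so that each deleted vertex has degree at most $k$ at the time of deletion. The total graph $T(G)$ has vertex set $V(G)\cup E(G)$: it consists of $G$, together with, for each edge $e=xy$, edges $ex$ and $ey$, and edges $ee'$ whenever edges $e,e'$ are adjacent in $G$. The $T$-sum $G+_T H$ has vertex set $(V(G)\cup E(G))\times V(H)$, and $(u_1,u_2)\sim(v_1,v_2)$ iff [$u_1=v_1\in V(G)$ and $u_2v_2\in E(H)$] or [$u_2=v_2$ and $u_1v_1\in E(T(G))$]. *)

(* Defs.v *)
(* finite simple graphs as symmetric irreflexive relations on a finType. *)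
From mathcomp Require Import all_boot.
Set Implicit Arguments. Unset Strict Implicit. Unset Printing Implicit Defensive.

Definition simple_graph (V : finType) (g : rel V) : Prop :=
  symmetric g /\ irreflexive g.

(* k-degenerate: the vertices can be deleted one by one in the order of the
   sequence s (each vertex exactly once) so that each deleted vertex has at most
   k neighbours among the not-yet-deleted vertices. *)
Definition degenerate (V : finType) (g : rel V) (k : nat) : Prop :=
  exists s : seq V,
    [/\ uniq s, (forall x, x \in s) &
        forall s1 x s2, s = s1 ++ x :: s2 -> #|[set y | (y \in s2) && g x y]| <= k].

Definition degree (V : finType) (g : rel V) (v : V) : nat := #|[set u | g v u]|.

(* maximum degree Delta(G) (0 for the empty graph) *)
Definition maxdeg (V : finType) (g : rel V) : nat := \max_(v : V) degree g v.

Definition is_edge (V : finType) (g : rel V) (e : {set V}) : bool :=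
  [exists x, exists y, g x y && (e == [set x; y])].

Definition edge_type (V : finType) (g : rel V) : finType :=
  {e : {set V} | is_edge g e}.

Definition total_rel (V : finType) (g : rel V) : rel (V + edge_type g)%type :=
  fun a b =>
    match a, b with
    | inl x, inl y => g x y
    | inl x, inr e => x \in val e
    | inr e, inl x => x \in val e
    | inr e, inr f => (e != f) && (val e :&: val f != set0)
    end.

Definition tsum_rel (V : finType) (g : rel V) (W : finType) (h : rel W)
  : rel ((V + edge_type g) * W)%type :=
  fun a b =>
    (match a.1, b.1 with
     | inl x, inl y => (x == y) && h a.2 b.2
     | _, _ => false
     end)
    || ((a.2 == b.2) && @total_rel V g a.1 b.1).

Arguments total_rel {V} g.
Arguments tsum_rel {V} g {W} h.

(* Main.v *)
Require Import Defs.
From mathcomp Require Import all_boot zify.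

Lemma deg_of_rank (T : finType) (g : rel T) k (f : T -> nat) :
  (forall x, #|[set y | (f x <= f y) && (y != x) && g x y]| <= k) -> degenerate g k.
Proof.
move=> H.
pose leT := fun a b => f a <= f b.
have tot : total leT by move=> a b; rewrite /leT leq_total.
have tr : transitive leT by move=> a b c; rewrite /leT => ??; apply: leq_trans; eauto.
exists (sort leT (enum T)); split.
- by rewrite sort_uniq enum_uniq.
- by move=> x; rewrite mem_sort mem_enum.
- move=> s1 x s2 E.
  have So := sort_sorted tot (enum T).
  have Un : uniq (sort leT (enum T)) by rewrite sort_uniq enum_uniq.
  rewrite E sorted_cat_cons in So; case/andP: So => _ P.
  have Al := order_path_min tr P.
  rewrite E cat_uniq /= in Un.
  case/and3P: Un => _ _ /andP [xs2 _].
  apply: leq_trans (H x); apply: subset_leq_card; apply/subsetP => y.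
  rewrite !inE => /andP [ys2 gy].
  rewrite gy andbT.
  have -> : y != x by apply/eqP => yx; move: xs2; rewrite -yx ys2.
  by rewrite andbT; exact: (allP Al y ys2).
Qed.

Lemma rank_of_deg (T : finType) (g : rel T) k :
  degenerate g k -> exists f : T -> nat,
    injective f /\ forall x, #|[set y | (f x < f y) && g x y]| <= k.
Proof.
move=> [s [Hu Ha Hd]].
exists (index^~ s); split.
  by move=> a b E; apply: (index_inj _ (Ha a) (Ha b)) => //; exact: a.
move=> x.
have: exists s1 s2, s = s1 ++ x :: s2.
  by case/splitPr: (Ha x) => s1 s2; exists s1, s2.
move=> [s1 [s2 E]].
apply: leq_trans (Hd _ _ _ E); apply: subset_leq_card; apply/subsetP => y.
rewrite !inE => /andP [lt gy]; rewrite gy andbT.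
move: (Ha y) Hu lt; rewrite E cat_uniq /= !index_cat !mem_cat /= => Hy.
case/and3P => _ /norP [xs1 _] /andP [xs2 _].
rewrite (negbTE xs1) eqxx addn0.
case: ifP => ys1.
  by move=> lt; have := index_mem y s1; rewrite ys1 => /leq_trans /(_ (ltnW lt)); rewrite ltnn.
case: eqP => [_|ne]; first by rewrite addn0 ltnn.
move=> _; move: Hy; rewrite ys1 /= inE.
by case: eqP => //= ?; subst.
Qed.

Lemma edge_ends (V : finType) (g : rel V) (e : edge_type g) :
  exists x y, g x y /\ val e = [set x; y].
Proof.
case: e => /= e /existsP [x /existsP [y /andP [gxy /eqP ->]]]; by exists x, y.
Qed.

Lemma deg_le (V : finType) (g : rel V) x : degree g x <= maxdeg g.
Proof. exact: (leq_bigmax (F := degree g) x). Qed.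

Theorem theorem4 (V : finType) (g : rel V) (W : finType) (h : rel W) (k l : nat) :
  simple_graph g -> simple_graph h ->
  degenerate g k -> degenerate h l ->
  degenerate (tsum_rel g h) (maxn (2 * maxdeg g) (k + l)).
Proof.
move=> [gs gi] [hs hi] /rank_of_deg [rG [iG dG]] /rank_of_deg [rH [iH dH]].
pose N := (\max_(w : W) rH w).+1.
have rHN : forall w, rH w < N by move=> w; rewrite ltnS (leq_bigmax (F := rH) w).
pose f := fun p : (V + edge_type g) * W =>
  match p.1 with inl x => (rG x * N + rH p.2).+1 | inr _ => 0 end.
apply: (@deg_of_rank _ _ _ f) => -[[x|e] w].
- apply: leq_trans (leq_maxr _ _).
  set S1 := [set z | (rG x < rG z) && g x z].
  set S2 := [set w' | (rH w < rH w') && h w w'].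
  apply: (@leq_trans #|[set (inl z, w) | z in S1] :|: [set (inl x, w') | w' in S2]|).
    apply: subset_leq_card; apply/subsetP => -[[x'|e'] w']; rewrite !inE /f /=.
      rewrite ltnS xpair_eqE /=.
      case/andP => /andP [le ne] /orP [/andP [/eqP xx hw]|/andP [/eqP ww gx]].
        subst x'; apply/orP; right; apply/imsetP; exists w' => //.
        rewrite inE hw andbT.
        rewrite eqxx /= in ne.
        have : rH w <= rH w' by rewrite leq_add2l in le.
        rewrite leq_eqVlt => /orP [/eqP E|//].
        by move/iH: E => E; rewrite E eqxx in ne.
      simpl in ww, gx; subst w'; apply/orP; left; apply/imsetP; exists x' => //.
      rewrite inE gx andbT.
      case: (ltngtP (rG x) (rG x')) => // c.
        have h1 : rG x' * N + rH w < rG x * N.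
          apply: (@leq_trans ((rG x').+1 * N)); last by rewrite leq_mul2r c orbT.
          by rewrite mulSn addnC ltn_add2r rHN.
        have := leq_ltn_trans le h1; by rewrite ltnNge leq_addr.
      by move/iG: c => c; subst x'; rewrite gi in gx.
    by [].
  apply: leq_trans (leq_card_setU _ _) _.
  apply: leq_add; apply: leq_trans (leq_imset_card _ _) _.
    exact: dG.
  exact: dH.
- have [x [y [gxy Ee]]] := @edge_ends _ _ e.
  apply: leq_trans (leq_maxl _ _).
  set E' := [set e' : edge_type g | (e' != e) && (val e' :&: val e != set0)].
  apply: (@leq_trans #|[set (inl z, w) | z in [set x; y]] :|: [set (inr e', w) | e' in E']|).
    apply: subset_leq_card; apply/subsetP => -[[z|e'] w']; rewrite !inE /f /=.
      rewrite /tsum_rel /= => /andP [/eqP ww ze]; subst w'.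
      by apply/orP; left; apply/imsetP; exists z => //; rewrite -Ee.
    case/andP => _; rewrite /tsum_rel /= => /andP [/eqP ww /andP [ne int]]; subst w'.
    apply/orP; right; apply/imsetP; exists e' => //.
    by rewrite inE eq_sym ne setIC.
  apply: leq_trans (leq_card_setU _ _) _.
  set A := [set [set x; z] | z in [set z | g x z]].
  set B := [set [set y; z] | z in [set z | g y z]].
  have vA : val e \in A by apply/imsetP; exists y; rewrite ?inE.
  have vB : val e \in B by apply/imsetP; exists x; [rewrite inE gs | rewrite Ee setUC].
  have cA := cardsD1 (val e) A; rewrite vA in cA.
  have cB := cardsD1 (val e) B; rewrite vB in cB.
  have dA : #|A| <= maxdeg g.
    apply: leq_trans (@deg_le _ g x); exact: leq_imset_card.
  have dB : #|B| <= maxdeg g.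
    apply: leq_trans (@deg_le _ g y); exact: leq_imset_card.
  have c2 : #|[set x; y]| <= 2 by rewrite cards2; case: (x != y).
  have cE : #|E'| <= #|A :\ val e| + #|B :\ val e|.
    rewrite -(card_imset _ val_inj).
    apply: leq_trans (leq_card_setU _ _).
    apply: subset_leq_card; apply/subsetP => v /imsetP [e' He' ->].
    rewrite inE in He'; case/andP: He' => ne /set0Pn [c].
    have [a [b [gab Ee']]] := @edge_ends _ _ e'.
    have nv : val e' != val e by apply: contra ne => /eqP /val_inj ->.
    rewrite inE Ee Ee' !inE => /andP [/orP [] /eqP -> /orP [] /eqP cE]; subst.
    + by rewrite -Ee -Ee' nv /=; apply/orP; left; apply/imsetP; exists b; rewrite ?inE.
    + by rewrite -Ee -Ee' nv /=; apply/orP; right; apply/imsetP; exists b; rewrite ?inE.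
    + by rewrite -Ee -Ee' nv /=; apply/orP; left; apply/imsetP; exists a; [rewrite inE gs | rewrite setUC].
    + by rewrite -Ee -Ee' nv /=; apply/orP; right; apply/imsetP; exists a; [rewrite inE gs | rewrite setUC].
  have c1 := leq_imset_card (fun z => (inl z, w) : (V + edge_type g) * W) [set x; y].
  have c3 := leq_imset_card (fun e' => (inr e', w) : (V + edge_type g) * W) E'.
  apply: leq_trans (leq_add (leq_trans c1 c2) (leq_trans c3 cE)) _.
  clear -cA cB dA dB.
  move: cA cB dA dB; move: #|A| #|B| #|A :\ val e| #|B :\ val e| (maxdeg g) => p q r t m.
  lia.
Qed.
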